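(* Let $G$ be a sparsifiable graph and $H$ a graph of minimum degree at least $3$. If $G$ contains $H$ as a minor, then $G$ contains $H$ as an induced minor.
   Context: Graphs are finite and simple. A vertex $v$ of a graph is sparsifiable if (1) $v$ has degree at most $2$, or (2) $v$ has degree $3$ and all of its neighbors have degree at most $2$, or (3) $v$ has degree $3$, one of its neighbors has degree at most $2$, and the two other neighbors form a triangle with $v$. A graph is sparsifiable if every vertex of it is sparsifiable. A minor model of $H$ in $G$ is a family of pairwise disjoint sets $X_v\subseteq V(G)$, $v\in V(H)$, each inducing a connected subgraph, such that for every edge $uv\in E(H)$ there is an edge of $G$ between $X_u$ and $X_v$; it is an induced minor model if moreover for distinct non-adjacent $u,v\in V(H)$ there is no edge between $X_u$ and $X_v$. $G$ contains $H$ as a (induced) minor iff there is a (induced) minor model of $H$ in $G$. *)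

(* Defs.v *)
From mathcomp Require Import all_boot.
Set Implicit Arguments. Unset Strict Implicit. Unset Printing Implicit Defensive.

Definition simple_graph (T : finType) (e : rel T) : Prop :=
  symmetric e /\ irreflexive e.

Definition nbhd (T : finType) (e : rel T) (v : T) : {set T} := [set u | e v u].
Definition deg (T : finType) (e : rel T) (v : T) : nat := #|nbhd e v|.

Definition sparsifiable_vertex (T : finType) (e : rel T) (v : T) : Prop :=
  deg e v <= 2
  \/ (deg e v = 3 /\ forall u, e v u -> deg e u <= 2)
  \/ (deg e v = 3 /\ exists u w z,
        [/\ nbhd e v = [set u; w; z], u != w, u != z, w != z &
            deg e u <= 2 /\ e w z]).

Definition sparsifiable (T : finType) (e : rel T) : Prop :=
  forall v, sparsifiable_vertex e v.

Definition min_degree_ge (T : finType) (e : rel T) (k : nat) : Prop :=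
  forall v, k <= deg e v.

Definition connected_in (T : finType) (e : rel T) (X : {set T}) : Prop :=
  X != set0 /\
  forall x y, x \in X -> y \in X ->
    connect (fun a b => [&& e a b, a \in X & b \in X]) x y.

Definition touch (T : finType) (e : rel T) (X Y : {set T}) : bool :=
  [exists x in X, exists y in Y, e x y].

Definition minor_model (TG TH : finType) (eG : rel TG) (eH : rel TH)
    (X : TH -> {set TG}) : Prop :=
  (forall v, connected_in eG (X v)) /\
  (forall u v, u != v -> [disjoint X u & X v]) /\
  (forall u v, eH u v -> touch eG (X u) (X v)).

Definition induced_minor_model (TG TH : finType) (eG : rel TG) (eH : rel TH)
    (X : TH -> {set TG}) : Prop :=
  minor_model eG eH X /\
  (forall u v, u != v -> ~~ eH u v -> ~~ touch eG (X u) (X v)).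

Definition has_minor (TG TH : finType) (eG : rel TG) (eH : rel TH) : Prop :=
  exists X : TH -> {set TG}, minor_model eG eH X.

Definition has_induced_minor (TG TH : finType) (eG : rel TG) (eH : rel TH) : Prop :=
  exists X : TH -> {set TG}, induced_minor_model eG eH X.

(* Main.v *)
Require Import Defs.
From mathcomp Require Import all_boot.
From Stdlib Require Import Classical.
Set Implicit Arguments. Unset Strict Implicit. Unset Printing Implicit Defensive.

Section S.
Variables (TG TH : finType) (eG : rel TG) (eH : rel TH).
Hypotheses (symG : symmetric eG) (irrG : irreflexive eG)
  (symH : symmetric eH) (irrH : irreflexive eH)
  (spG : sparsifiable eG) (minH : min_degree_ge eH 3).

Definition Rin (X : {set TG}) := fun a b => [&& eG a b, a \in X & b \in X].

Lemma Rin_sym X : symmetric (Rin X).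
Proof. move=> a b; rewrite /Rin symG; case: (eG b a) => //=; exact: andbC. Qed.

Lemma conn_from (X : {set TG}) r : r \in X ->
  (forall q, q \in X -> connect (Rin X) q r) -> forall a b, a \in X -> b \in X ->
  connect (Rin X) a b.
Proof.
move=> rX H a b aX bX; apply: connect_trans (H a aX) _.
rewrite (sym_connect_sym (Rin_sym X)) H //.
Qed.

Lemma leaf_conn (X : {set TG}) p r : connected_in eG X -> p \in X -> r \in X -> eG p r ->
  (forall n, eG p n -> n \in X -> n = r) -> connected_in eG (X :\ p).
Proof.
move=> [_ HX] pX rX epr uniq.
have rp : r != p by apply/eqP => E; move: epr; rewrite E irrG.
have rX' : r \in X :\ p by rewrite !inE rp.
have key : forall q, q \in X :\ p -> connect (Rin (X :\ p)) q r.
  move=> q qX'; have qX : q \in X by move: qX'; rewrite !inE => /andP[].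
  have /connectP [s Hs Hl] := HX q p qX pX.
  elim: s q qX' {qX} Hs Hl => [|h s IH] q qX' /= Hs Hl.
    by move: qX'; rewrite Hl !inE eqxx.
  move/andP: Hs => [Rqh Hs]; move/and3P: Rqh => [eqh qX hX].
  case: (eqVneq h p) => [Ehp|hp].
    rewrite Ehp in eqh; rewrite (uniq q) ?connect0 // symG //.
  have hX' : h \in X :\ p by rewrite !inE hp.
  apply: connect_trans (connect1 _) (IH h hX' Hs Hl).
  by rewrite /Rin eqh qX' hX'.
split; first by apply/set0Pn; exists r.
exact: conn_from rX' key.
Qed.

Lemma add_conn (X : {set TG}) p c : connected_in eG X -> c \in X -> eG p c ->
  connected_in eG (p |: X).
Proof.
move=> [_ HX] cX epc.
have cX' : c \in p |: X by rewrite !inE cX orbT.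
split; first by apply/set0Pn; exists c.
apply: (conn_from cX') => q; rewrite !inE => /orP[/eqP->|qX].
  by apply: connect1; rewrite /Rin epc !inE eqxx cX orbT.
apply: connect_sub (HX q c qX cX) => a b /and3P[eab aX bX].
by apply: connect1; rewrite /Rin eab !inE aX bX !orbT.
Qed.

Lemma disj_eq (X : TH -> {set TG}) t1 t2 q :
  (forall u v, u != v -> [disjoint X u & X v]) -> q \in X t1 -> q \in X t2 -> t1 = t2.
Proof.
move=> D q1 q2; apply/eqP/negPn/negP => ne.
by move: (disjointFr (D _ _ ne) q1); rewrite q2.
Qed.


Lemma disjI (A B : {set TG}) : (forall q, q \in A -> q \in B -> False) -> [disjoint A & B].
Proof.
move=> H; rewrite disjoint_subset; apply/subsetP => q qA; rewrite !inE.
by apply/negP => qB; exact: H q qA qB.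
Qed.


Lemma two_nbrs (A : {set TG}) q : #|A| <= 2 -> q \in A ->
  exists r, forall n, n \in A -> n != q -> n = r.
Proof.
move=> cA qA; case: (boolP [exists n in A, n != q]).
  move/exists_inP => [r rA rq]; exists r => n nA nq; apply/eqP/negPn/negP => nr.
  have : 2 < #|A|.
    apply/card_gt2P; exists q, r, n; split; first by rewrite qA rA nA.
    by split; rewrite // eq_sym.
  by rewrite ltnNge cA.
move/exists_inPn => H; exists q => n nA nq; by move: (H n nA); rewrite nq.
Qed.

Lemma three_nbrs (A : {set TG}) q1 q2 : #|A| <= 3 -> q1 \in A -> q2 \in A -> q1 != q2 ->
  exists r, forall n, n \in A -> n != q1 -> n != q2 -> n = r.
Proof.
move=> cA q1A q2A q12.
have cA' : #|A :\ q1| <= 2 by move: cA; rewrite (cardsD1 q1) q1A.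
have q2A' : q2 \in A :\ q1 by rewrite !inE eq_sym q12 q2A.
have [r Hr] := two_nbrs cA' q2A'.
by exists r => n nA n1 n2; apply: Hr => //; rewrite !inE n1 nA.
Qed.

Lemma deg_le3 v : deg eG v <= 3.
Proof. by case: (spG v) => [h|[[-> _]|[-> _]]] //; exact: leq_trans h _. Qed.

Definition Mset (X : TH -> {set TG}) : {set TG * TH} := [set pt | pt.1 \in X pt.2].
Definition bad (X : TH -> {set TG}) : {set TG * TG} :=
  [set pq | eG pq.1 pq.2 && [exists t, exists t',
     [&& pq.1 \in X t, pq.2 \in X t', t != t' & ~~ eH t t']]].
Definition mu X := #|Mset X| + #|bad X|.

Lemma L1 (X : TH -> {set TG}) s p : minor_model eG eH X -> p \in X s ->
  (forall n, eG p n -> n \notin X s) ->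
  forall t, eH s t -> exists n, eG p n /\ n \in X t.
Proof.
move=> [Hc [Hd Ht]] ps Hn t est.
have single : forall q, q \in X s -> q = p.
  move=> q qs; case: (Hc s) => _ /(_ p q ps qs) /connectP [[|h l] Hs Hl] //.
  by move: Hs => /= /andP [/and3P [eph _ hs] _]; move: (Hn h eph); rewrite hs.
move: (Ht s t est) => /existsP [x /andP [xs /existsP [y /andP [yt exy]]]].
by exists y; rewrite -(single x xs).
Qed.

Section Min.
Variable X : TH -> {set TG}.
Hypothesis HX : minor_model eG eH X.
Hypothesis Hmin : forall X', minor_model eG eH X' -> mu X' < mu X -> False.

Lemma L2 s p r : p \in X s -> r \in X s -> eG p r ->
  (forall n, eG p n -> n \in X s -> n = r) ->
  exists n t, [/\ eG p n, n \in X t & eH s t].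
Proof.
move=> ps rs epr uniq.
case: (boolP [exists n, exists t, [&& eG p n, n \in X t & eH s t]]).
  by move/existsP=> [n /existsP [t /and3P [? ? ?]]]; exists n, t.
move=> /existsPn Hn; have N : forall n t, eG p n -> n \in X t -> eH s t -> False.
  by move=> n t a b c; move: (Hn n) => /existsPn /(_ t); rewrite a b c.
exfalso; case: HX => [Hc [Hd Ht]].
pose X' := fun t => if t == s then X s :\ p else X t.
have memX : forall q t, q \in X' t = (q \in X t) && ((t == s) ==> (q != p)).
  move=> q t; rewrite /X'; case: eqVneq => [->|_]; last by rewrite andbT.
  by rewrite !inE andbC.
have subX : forall q t, q \in X' t -> q \in X t by move=> q t; rewrite memX => /andP[].
have HX' : minor_model eG eH X'.
  split; [|split].
  - move=> t; rewrite /X' /=; case: ifP => [/eqP Ets|_]; last exact: Hc.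
    exact: leaf_conn (Hc s) ps rs epr uniq.
  - move=> u v uv; apply: disjI => q qu qv.
    by move: (disjointFr (Hd u v uv) (subX _ _ qu)); rewrite (subX _ _ qv).
  - move=> u v euv; move: (Ht u v euv) => /existsP [x /andP [xu /existsP [y /andP [yv exy]]]].
    apply/existsP; exists x; rewrite memX xu /=; apply/andP; split.
      apply/implyP=> /eqP us; apply/eqP => xp; rewrite us xp in euv exy.
      exact: N y v exy yv euv.
    apply/existsP; exists y; rewrite memX yv exy /= andbT.
    apply/implyP=> /eqP vs; apply/eqP=> yp; rewrite vs yp in euv exy.
    by apply: (N x u); rewrite 1?symG 1?symH.
apply: (Hmin HX').
have sub1 : Mset X' \proper Mset X.
  apply/properP; split.
    by apply/subsetP => -[q t]; rewrite !inE /=; exact: subX.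
  by exists (p, s); rewrite !inE /= ?ps // memX eqxx /= eqxx andbF.
have sub2 : bad X' \subset bad X.
  apply/subsetP => -[a b]; rewrite !inE /= => /andP [-> /existsP [t /existsP [t' /and4P [a1 b1 tt ntt]]]].
  by apply/existsP; exists t; apply/existsP; exists t'; rewrite (subX _ _ a1) (subX _ _ b1) tt ntt.
by have := leq_add (proper_card sub1) (subset_leq_card sub2); rewrite addSn.
Qed.


Definition useless s n := forall t, n \in X t -> (t != s) && ~~ eH s t.

Lemma useless_of s n t : n \in X t -> t != s -> ~~ eH s t -> useless s n.
Proof.
move=> nt ts nst t' nt'; have [_ [Hd _]] := HX.
by rewrite -(disj_eq Hd nt nt') ts nst.
Qed.

Lemma K s p r : p \in X s -> (forall n, eG p n -> n != r -> useless s n) -> False.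
Proof.
move=> ps Hu; have [Hc [Hd Ht]] := HX.
case: (boolP [exists n, eG p n && (n \in X s)]).
  move/existsP => [q /andP [epq qs]].
  have uniq : forall n, eG p n -> n \in X s -> n = r.
    move=> n epn ns; apply/eqP/negPn/negP => nr.
    by move: (Hu n epn nr s ns); rewrite eqxx.
  have qr := uniq q epq qs; rewrite qr in epq qs.
  have [n [t [epn nt est]]] := L2 ps qs epq uniq.
  case: (eqVneq n r) => [nr|nr].
    by rewrite nr in nt; rewrite (disj_eq Hd nt qs) irrH in est.
  by move: (Hu n epn nr t nt) => /andP [_]; rewrite est.
move/existsPn => Hn.
have Hn' : forall n, eG p n -> n \notin X s by move=> n epn; move: (Hn n); rewrite epn.
have : 1 < #|nbhd eH s| := leq_trans (isT : 1 < 3) (minH s).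
move/card_gt1P => [t1 [t2 [t1s t2s t12]]]; rewrite /nbhd !inE in t1s t2s.
have [n1 [e1 n1t]] := L1 HX ps Hn' t1s.
have [n2 [e2 n2t]] := L1 HX ps Hn' t2s.
have n1r : n1 = r.
  apply/eqP/negPn/negP => nr; by move: (Hu n1 e1 nr t1 n1t) => /andP [_]; rewrite t1s.
have n2r : n2 = r.
  apply/eqP/negPn/negP => nr; by move: (Hu n2 e2 nr t2 n2t) => /andP [_]; rewrite t2s.
rewrite n1r in n1t; rewrite n2r in n2t.
by move: t12; rewrite (disj_eq Hd n1t n2t) eqxx.
Qed.

Lemma case1 s p q : p \in X s -> deg eG p <= 2 -> eG p q -> useless s q -> False.
Proof.
move=> ps dp epq uq; have qN : q \in nbhd eG p by rewrite /nbhd inE.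
have [r Hr] := two_nbrs dp qN.
apply: (K (r:=r) ps) => n epn nr; case: (eqVneq n q) => [->//|nq].
by move: nr; rewrite (Hr n _ nq) ?eqxx // /nbhd inE.
Qed.

Lemma case2 s p q1 q2 : p \in X s -> eG p q1 -> eG p q2 -> q1 != q2 ->
  useless s q1 -> useless s q2 -> False.
Proof.
move=> ps e1 e2 q12 u1 u2.
have q1N : q1 \in nbhd eG p by rewrite /nbhd inE.
have q2N : q2 \in nbhd eG p by rewrite /nbhd inE.
have [r Hr] := three_nbrs (deg_le3 p) q1N q2N q12.
apply: (K (r:=r) ps) => n epn nr; case: (eqVneq n q1) => [->//|n1].
case: (eqVneq n q2) => [->//|n2].
by move: nr; rewrite (Hr n _ n1 n2) ?eqxx // /nbhd inE.
Qed.


Lemma Move u v w x y a c : x \in X u -> y \in X v -> c \in X w -> a \in X u ->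
  eG x y -> eG x c -> eG x a -> (forall n, eG x n -> [\/ n = a, n = y | n = c]) ->
  eH u w -> eH v w -> ~~ eH u v -> u != v -> False.
Proof.
move=> xu yv cw au exy exc exa Nx euw evw nuv uv.
have [Hc [Hd Ht]] := HX.
have wu : w != u by apply/eqP => E; move: euw; rewrite E irrH.
have xonly : forall t, x \in X t -> t = u by move=> t xt; exact: disj_eq Hd xt xu.
have xw : x \notin X w by apply/negP => /xonly E; move: wu; rewrite E eqxx.
have ax : a != x by apply/eqP => E; move: exa; rewrite E irrG.
have yx : y != x by apply/eqP => E; move: exy; rewrite E irrG.
pose X' := fun t => if t == u then X u :\ x else if t == w then x |: X w else X t.
have memXo : forall q t, q != x -> (q \in X' t) = (q \in X t).
  move=> q t qx; rewrite /X' /=; case: ifP => [/eqP->|_]; first by rewrite !inE qx.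
  by case: ifP => [/eqP->|_] //; rewrite !inE (negbTE qx).
have memXx : forall t, (x \in X' t) = (t == w).
  move=> t; rewrite /X' /=; case: ifP => [/eqP->|tu].
    by rewrite !inE eqxx eq_sym (negbTE wu).
  case: ifP => [_|tw]; first by rewrite !inE eqxx.
  apply/negbTE/negP => xt; by move: tu; rewrite (xonly t xt) eqxx.
have uniqa : forall n, eG x n -> n \in X u -> n = a.
  move=> n exn nu; case: (Nx n exn) => E //; rewrite E in nu.
    by move: uv; rewrite (disj_eq Hd nu yv) eqxx.
  by move: wu; rewrite (disj_eq Hd nu cw) eqxx.
have nbrU : forall q t, eG x q -> q \in X t -> eH u t -> t = w.
  move=> q t exq qt eut; case: (Nx q exq) => E; rewrite E in qt.
  - by rewrite (disj_eq Hd qt au) irrH in eut.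
  - by move: nuv; rewrite -(disj_eq Hd qt yv) eut.
  - exact: disj_eq Hd qt cw.
have nbr : forall q t, eG x q -> q \in X' t -> (t == w) || eH w t.
  move=> q t exq; case: (Nx q exq) => ->.
  - by rewrite memXo // => at'; rewrite (disj_eq Hd at' au) symH euw orbT.
  - by rewrite memXo // => yt; rewrite (disj_eq Hd yt yv) symH evw orbT.
  - rewrite memXo; last by apply/eqP => E; move: exc; rewrite E irrG.
    by move=> ct; rewrite (disj_eq Hd ct cw) eqxx.
have HX' : minor_model eG eH X'.
  split; [|split].
  - move=> t; rewrite /X' /=; case: ifP => _.
      exact: leaf_conn (Hc u) xu au exa uniqa.
    case: ifP => _; last exact: Hc.
    exact: add_conn (Hc w) cw exc.
  - move=> t1 t2 t12; apply: disjI => q q1 q2.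
    case: (eqVneq q x) => [E|qx].
      rewrite E !memXx in q1 q2; by move: t12; rewrite (eqP q1) (eqP q2) eqxx.
    rewrite !memXo // in q1 q2.
    by move: (disjointFr (Hd _ _ t12) q1); rewrite q2.
  - move=> t1 t2 e12; move: (Ht t1 t2 e12) => /existsP [q1 /andP [q1t /existsP [q2 /andP [q2t eq12]]]].
    case: (eqVneq q1 x) => [E1|q1x].
      rewrite E1 in q1t eq12; have t1u := xonly _ q1t; rewrite t1u in e12 *.
      rewrite (nbrU q2 t2 eq12 q2t e12).
      apply/existsP; exists a; rewrite memXo // au /=; apply/existsP; exists x.
      by rewrite memXx eqxx symG exa.
    case: (eqVneq q2 x) => [E2|q2x].
      rewrite E2 in q2t eq12; have t2u := xonly _ q2t; rewrite t2u in e12 *.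
      rewrite (nbrU q1 t1 _ q1t _); first last.
      + by rewrite symH.
      + by rewrite symG.
      apply/existsP; exists x; rewrite memXx eqxx /=; apply/existsP; exists a.
      by rewrite memXo // au exa.
    apply/existsP; exists q1; rewrite memXo // q1t /=; apply/existsP; exists q2.
    by rewrite memXo // q2t eq12.
have eqM : Mset X' = (x, w) |: (Mset X :\ (x, u)).
  apply/setP => -[q t]; rewrite !inE /= !xpair_eqE.
  case: (eqVneq q x) => [->|qx].
    rewrite memXx ?eqxx /=; case: (eqVneq t w) => [->|tw] //=.
    case: (eqVneq t u) => [->|tu] //=.
    apply/esym/negbTE/negP => xt; by move: tu; rewrite (xonly _ xt) eqxx.
  by rewrite memXo // (negbTE qx).
have cM : #|Mset X'| = #|Mset X|.
  by rewrite eqM cardsU1 [in RHS](cardsD1 (x,u)) !inE /= xu (negbTE xw) andbF.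
have sub2 : bad X' \proper bad X.
  apply/properP; split.
    apply/subsetP => -[q1 q2]; rewrite !inE /= => /andP [e12 /existsP [t /existsP [t' /and4P [q1t q2t tt' nt]]]].
    rewrite e12 /=.
    case: (eqVneq q1 x) => [E1|q1x].
      rewrite E1 memXx in q1t; rewrite E1 in e12.
      move: (nbr q2 t' e12 q2t); rewrite (eqP q1t) in tt' nt.
      by rewrite eq_sym (negbTE tt') (negbTE nt).
    case: (eqVneq q2 x) => [E2|q2x].
      rewrite E2 memXx in q2t; rewrite E2 symG in e12.
      move: (nbr q1 t e12 q1t); rewrite (eqP q2t) in tt' nt.
      by rewrite symH in nt; rewrite (negbTE tt') (negbTE nt).
    rewrite memXo // in q1t; rewrite memXo // in q2t.
    by apply/existsP; exists t; apply/existsP; exists t'; rewrite q1t q2t tt' nt.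
  exists (x, y).
    rewrite !inE /= exy /=; apply/existsP; exists u; apply/existsP; exists v.
    by rewrite xu yv uv nuv.
  rewrite !inE /= exy /=; apply/existsPn => t; apply/existsPn => t'.
  apply/negP => /and4P [xt yt tt' nt]; rewrite memXx in xt; rewrite memXo // in yt.
  by move: nt; rewrite (eqP xt) (disj_eq Hd yt yv) symH evw.
apply: (Hmin HX'); rewrite /mu cM ltn_add2l; exact: proper_card sub2.
Qed.

Lemma no_bad u v x y : x \in X u -> y \in X v -> u != v -> ~~ eH u v -> eG x y -> False.
Proof.
move=> xu yv uv nuv exy; have [Hc [Hd Ht]] := HX.
have vu : v != u by rewrite eq_sym.
have nvu : ~~ eH v u by rewrite symH.
have uy : useless u y by apply: (useless_of yv).
have vx : useless v x by apply: (useless_of xu).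
have eyx : eG y x by rewrite symG.
case: (spG x) => [dx|[[dx3 Hall]|[dx3 [a [w [z [Nx aw az wz [da ewz]]]]]]]].
- exact: case1 xu dx exy uy.
- exact: case1 yv (Hall y exy) eyx vx.
have Nx' : forall n, eG x n -> [|| n == a, n == w | n == z].
  move=> n exn; have : n \in nbhd eG x by rewrite /nbhd inE.
  by rewrite Nx !inE -orbA.
have exN : forall n, n \in [set a; w; z] -> eG x n by move=> n; rewrite -Nx /nbhd inE.
have [Ey|ya] := eqVneq y a; first by apply: (case1 yv _ eyx vx); rewrite Ey.
have exa : eG x a by apply: exN; rewrite !inE eqxx.
have [c [exc eyc cy Nc]] : exists c, [/\ eG x c, eG y c, c != y &
    forall n, eG x n -> [\/ n = a, n = y | n = c]].
  case/or3P: (Nx' y exy) => /eqP Ey; first by move: ya; rewrite Ey eqxx.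
    exists z; rewrite Ey; split => //; first by apply: exN; rewrite !inE eqxx !orbT.
      by rewrite eq_sym.
    by move=> n /Nx' /or3P [] /eqP ->; [constructor 1|constructor 2|constructor 3].
  exists w; rewrite Ey; split => //; first by apply: exN; rewrite !inE eqxx !orbT.
    by rewrite symG.
  by move=> n /Nx' /or3P [] /eqP ->; [constructor 1|constructor 3|constructor 2].
have xc : x != c by apply/eqP => E; move: exc; rewrite E irrG.
have yc : y != c by rewrite eq_sym.
case: (boolP [exists t, c \in X t]); last first.
  move/existsPn => Hn; apply: (K (r := a) xu) => n exn na.
  case: (Nc n exn) => E; first by rewrite E eqxx in na.
    by rewrite E.
  by rewrite E => t ct; move: (Hn t); rewrite ct.
move/existsP => [t ct].
case: (eqVneq t u) => [Etu|tu].
  apply: (case2 yv eyx eyc xc vx); apply: (useless_of ct); by rewrite Etu.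
case: (eqVneq t v) => [Etv|tv].
  apply: (case2 xu exy exc yc uy); apply: (useless_of ct); by rewrite Etv.
case: (boolP (eH u t)) => eut; last first.
  exact: (case2 xu exy exc yc uy (useless_of ct tu eut)).
case: (boolP (eH v t)) => evt; last first.
  exact: (case2 yv eyx eyc xc vx (useless_of ct tv evt)).
have au : a \in X u.
  case: (boolP [exists n, eG x n && (n \in X u)]).
    move/existsP => [n /andP [exn nu]]; case: (Nc n exn) => E; rewrite E in nu => //.
      by move: uv; rewrite (disj_eq Hd nu yv) eqxx.
    by move: tu; rewrite (disj_eq Hd ct nu) eqxx.
  move/existsPn => Hn.
  have Hn' : forall n, eG x n -> n \notin X u by move=> n exn; move: (Hn n); rewrite exn.
  have : 2 < #|nbhd eH u| := minH u.
  move/card_gt2P => [t1 [t2 [t3 [[i1 i2 i3] [d12 d23 d31]]]]].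
  rewrite /nbhd !inE in i1 i2 i3.
  have [n1 [e1 n1t]] := L1 HX xu Hn' i1.
  have [n2 [e2 n2t]] := L1 HX xu Hn' i2.
  have [n3 [e3 n3t]] := L1 HX xu Hn' i3.
  have A : forall n t', eG x n -> n \in X t' -> eH u t' -> n = a \/ n = c.
    move=> n t' exn nt' eut'; case: (Nc n exn) => E; [by left| |by right].
    by rewrite E in nt'; move: nuv; rewrite -(disj_eq Hd nt' yv) eut'.
  have D : forall n n' s1 s2, n \in X s1 -> n' \in X s2 -> s1 != s2 -> n != n'.
    move=> n n' s1 s2 h1 h2 s12; apply/eqP => E; rewrite E in h1.
    by move: s12; rewrite (disj_eq Hd h1 h2) eqxx.
  move: (D _ _ _ _ n1t n2t d12) (D _ _ _ _ n2t n3t d23) (D _ _ _ _ n3t n1t d31).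
  by case: (A _ _ e1 n1t i1) => ->; case: (A _ _ e2 n2t i2) => ->;
     case: (A _ _ e3 n3t i3) => ->; rewrite eqxx ?andbF.
exact: (Move xu yv ct au exy exc exa Nc eut evt nuv uv).
Qed.

End Min.
End S.

Theorem lemma2 (TG TH : finType) (eG : rel TG) (eH : rel TH) :
  simple_graph eG -> simple_graph eH ->
  sparsifiable eG -> min_degree_ge eH 3 ->
  has_minor eG eH -> has_induced_minor eG eH.
Proof.
move=> [symG irrG] [symH irrH] spG minH [X0 HX0].
suff: forall n X, mu eG eH X <= n -> minor_model eG eH X -> has_induced_minor eG eH.
  by move/(_ _ X0 (leqnn _) HX0).
elim=> [|n IH] X mX HX;
  case: (classic (exists X', minor_model eG eH X' /\ mu eG eH X' < mu eG eH X))
    => [[X' [HX' lt]]|Hno].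
- by move: (leq_trans lt mX).
- exists X; split => // u v uv nuv; apply/negP.
  move=> /existsP [x /andP [xu /existsP [y /andP [yv exy]]]].
  apply: (no_bad symG irrG symH irrH spG minH HX _ xu yv uv nuv exy).
  by move=> X' h l; apply: Hno; exists X'.
- by apply: (IH X') => //; rewrite -ltnS; exact: leq_trans lt mX.
- exists X; split => // u v uv nuv; apply/negP.
  move=> /existsP [x /andP [xu /existsP [y /andP [yv exy]]]].
  apply: (no_bad symG irrG symH irrH spG minH HX _ xu yv uv nuv exy).
  by move=> X' h l; apply: Hno; exists X'.
Qed.
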